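(* Let $n\in\mathbb{N}_0$ and let $p\in\mathbb{N}_0$ with $p\ge n$. Let $\psi_{p,n}$ denote the $n$-th primitive of the Legendre polynomial $L_p$. Then \[ \int_{-1}^1\psi_{p,n}(x)^2\,dx=\frac{2^{n+1}}{n!}\,\frac{1}{2p+1}\prod_{k=1}^n\frac{2k-1}{(2p+1)^2-4k^2}. \]
   Context: $L_j$ denotes the Legendre polynomial of degree $j$ on $(-1,1)$, normalized so that $L_j(1)=1$ and $\int_{-1}^1L_iL_j=\frac{2}{2i+1}\delta_{ij}$. The $n$-th primitive is defined recursively by $\psi_{i,0}:=L_i$ and $\psi_{i,n}(x):=\int_{-1}^x\psi_{i,n-1}(\zeta)\,d\zeta$ for $n\ge1$. *)

(* Defs.v *)
From HB Require Import structures.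
From mathcomp Require Import all_boot all_order all_algebra.
From mathcomp Require Import all_classical all_reals all_analysis.
Set Implicit Arguments. Unset Strict Implicit. Unset Printing Implicit Defensive.
Import Order.TTheory GRing.Theory Num.Theory.
Import numFieldNormedType.Exports.
Local Open Scope classical_set_scope.
Local Open Scope ring_scope.

(* Legendre polynomial of degree j (Rodrigues' formula):
   L_j = 1/(2^j j!) d^j/dx^j (x^2 - 1)^j, so that L_j(1) = 1. *)
Definition legendre (R : realType) (j : nat) : {poly R} :=
  ((2 ^+ j * (j`!)%:R)^-1) *: (('X ^+ 2 - 1) ^+ j)^`(j).

Fixpoint psi (R : realType) (i n : nat) : R -> R :=
  match n with
  | 0 => fun x => (legendre R i).[x]
  | n'.+1 => fun x =>
      (\int[@lebesgue_measure R]_(t in `[-1, x]) @psi R i n' t)%R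
  end.

(* Main.v *)
Require Import Defs.
From HB Require Import structures.
From mathcomp Require Import all_boot all_order all_algebra.
From mathcomp Require Import all_classical all_reals all_analysis.
From mathcomp Require Import ring lra zify.
Set Implicit Arguments. Unset Strict Implicit. Unset Printing Implicit Defensive.
Import Order.TTheory GRing.Theory Num.Theory.
Import numFieldNormedType.Exports.
Local Open Scope classical_set_scope.
Local Open Scope ring_scope.

Section Alg.
Variable R : realType.
Implicit Types q f g : {poly R}.

Definition prim q : {poly R} :=
  \poly_(i < (size q).+1) (if i is j.+1 then q`_j / j.+1%:R else 0).

Lemma coef_prim q i : (prim q)`_i = if i is j.+1 then q`_j / j.+1%:R else 0.
Proof.
rewrite coef_poly; case: ltnP => //; case: i => // j; rewrite ltnS => H.
by rewrite nth_default ?mul0r.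
Qed.

Lemma prim_deriv q : (prim q)^`() = q.
Proof.
by apply/polyP => i; rewrite coef_deriv coef_prim -[_ *+ _]mulr_natr divfK.
Qed.

Lemma deriv_prim q : prim (q^`()) = q - (q`_0)%:P.
Proof.
apply/polyP => i; rewrite coef_prim coefB coefC; case: i => [|i].
  by rewrite subrr.
by rewrite coef_deriv -[_ *+ _]mulr_natr mulfK // subr0.
Qed.

Lemma primD f g : prim (f + g) = prim f + prim g.
Proof.
by apply/polyP => i; rewrite coefD !coef_prim; case: i => [|i]; rewrite ?addr0 // coefD mulrDl.
Qed.

Lemma primZ (a : R) f : prim (a *: f) = a *: prim f.
Proof.
by apply/polyP => i; rewrite coefZ !coef_prim; case: i => [|i]; rewrite ?mulr0 // coefZ mulrA.
Qed.

Lemma primN f : prim (- f) = - prim f.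
Proof. by rewrite -scaleN1r primZ scaleN1r. Qed.

Definition Int q := (prim q).[1] - (prim q).[-1].

Lemma IntD f g : Int (f + g) = Int f + Int g.
Proof. rewrite /Int primD !hornerD; ring. Qed.

Lemma IntZ a f : Int (a *: f) = a * Int f.
Proof. rewrite /Int primZ !hornerZ; ring. Qed.

Lemma IntN f : Int (- f) = - Int f.
Proof. rewrite /Int primN !hornerN; ring. Qed.

Lemma IntB f g : Int (f - g) = Int f - Int g.
Proof. by rewrite IntD IntN. Qed.

Lemma IntC a f : Int (a%:P * f) = a * Int f.
Proof. by rewrite mul_polyC IntZ. Qed.

Lemma Int_deriv f : Int f^`() = f.[1] - f.[-1].
Proof. rewrite /Int deriv_prim !hornerD !hornerN !hornerC; ring. Qed.

Lemma Int_parts f g : Int (f^`() * g) = (f * g).[1] - (f * g).[-1] - Int (f * g^`()).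
Proof.
have := Int_deriv (f * g); rewrite derivM IntD => <-; ring.
Qed.


Lemma dvd_deriv (a : R) m g k : (k <= m)%N ->
  exists h, (('X - a%:P)^+m * g)^`(k) = ('X - a%:P)^+(m - k) * h.
Proof.
elim: k => [|k IH] H; first by exists g; rewrite derivn0 subn0.
have [h Hh] := IH (ltnW H).
have E : (m - k = (m - k.+1).+1)%N by rewrite subnSK.
rewrite derivnS Hh E derivM deriv_exp derivXsubC.
exists ((m - k.+1).+1%:R%:P * h + ('X - a%:P) * h^`()).
rewrite exprS /=; rewrite -mulr_natr; ring.
Qed.

Definition u p : {poly R} := ('X ^+ 2 - 1) ^+ p.
Definition c p : R := (2 ^+ p * (p`!)%:R)^-1.
Definition ph p n : {poly R} := c p *: (u p)^`(p - n).

Lemma u_fact p : u p = ('X - 1%:P)^+p * ('X - (-1)%:P)^+p.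
Proof. by rewrite /u -exprMn; congr (_ ^+ _); rewrite polyCN; ring. Qed.

Lemma u_vanish p k : (k < p)%N -> ((u p)^`(k)).[1] = 0 /\ ((u p)^`(k)).[-1] = 0.
Proof.
move=> kp; split.
  rewrite u_fact; have [h ->] := dvd_deriv 1 (('X - (-1)%:P)^+p) (ltnW kp).
  by rewrite hornerM horner_exp hornerXsubC subrr expr0n subn_eq0 leqNgt kp mul0r.
rewrite u_fact mulrC.
have [h ->] := dvd_deriv (-1) (('X - 1%:P)^+p) (ltnW kp).
by rewrite hornerM horner_exp hornerXsubC subrr expr0n subn_eq0 leqNgt kp mul0r.
Qed.


Fixpoint Q p n : {poly R} :=
  if n is n'.+1 then prim (Q p n') - ((prim (Q p n')).[-1])%:P else legendre R p.

Lemma Q_ph p n : (n <= p)%N -> Q p n = ph p n.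
Proof.
elim: n => [|n IH] H; first by rewrite /ph subn0.
rewrite /= IH ?(ltnW H) // /ph.
have E : (p - n = (p - n.+1).+1)%N by rewrite subnSK.
rewrite E derivnS primZ deriv_prim.
have [_ Hv] := u_vanish (k := p - n.+1) (p := p) ltac:(lia).
rewrite hornerZ hornerD hornerN hornerC Hv sub0r.
rewrite -!mul_polyC !(polyCM, polyCN, polyCB, polyC0); ring.
Qed.

Lemma Rint_poly q (a b : R) : a <= b ->
  (\int[@lebesgue_measure R]_(x in `[a, b]) q.[x])%R = (prim q).[b] - (prim q).[a].
Proof.
rewrite le_eqVlt => /predU1P[<-|ab].
  by rewrite set_itv1 Rintegral_set1 subrr.
rewrite /Rintegral (@continuous_FTC2 _ _ (horner (prim q))) //=.
- apply/continuous_subspaceT => x; exact: continuous_horner.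
- split=> [x _| |].
  + exact: derivable_horner.
  + by apply: cvg_at_right_filter; exact: continuous_horner.
  + by apply: cvg_at_left_filter; exact: continuous_horner.
- by move=> x _; rewrite -derivE prim_deriv.
Qed.

Lemma psiQ p n x : -1 <= x -> @psi R p n x = (Q p n).[x].
Proof.
elim: n x => [|n IH] x hx //=.
transitivity (\int[@lebesgue_measure R]_(t in `[-1, x]) (Q p n).[t])%R.
  apply: eq_Rintegral.
  by move=> t; rewrite inE /= in_itv /= => /andP[h1 _]; exact: IH.
by rewrite Rint_poly // hornerD hornerN hornerC.
Qed.

Lemma Int_Rint q : (\int[@lebesgue_measure R]_(x in `[-1, 1]) q.[x])%R = Int q.
Proof. by rewrite Rint_poly // lerN10. Qed.


Lemma IntMn k f : Int (k%:R * f) = k%:R * Int f.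
Proof. by rewrite -polyC_natr IntC. Qed.

Lemma ph_deriv p n : (n < p)%N -> (ph p n.+1)^`() = ph p n.
Proof.
move=> np; rewrite /ph derivZ -derivnS; congr (_ *: _); congr (_^`(_)); lia.
Qed.

Lemma ph_vanish p n : (0 < n <= p)%N -> (ph p n).[1] = 0 /\ (ph p n).[-1] = 0.
Proof.
move=> H; have [h1 h2] := u_vanish (p := p) (k := p - n) ltac:(lia).
by rewrite /ph !hornerZ h1 h2 mulr0.
Qed.

Lemma cS p : c p = c p.+1 * (2 * p.+1%:R).
Proof.
rewrite /c factS natrM exprS.
have h1 : (p`!)%:R != 0 :> R by rewrite pnatr_eq0 -lt0n fact_gt0.
have h2 : p.+1%:R != 0 :> R by rewrite pnatr_eq0.
have h3 : 2 ^+ p != 0 :> R by rewrite expf_neq0 // pnatr_eq0.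
field; rewrite h1 h3 andbT /=; rewrite -natr1 addrC in h2; exact: h2.
Qed.

Lemma deriv_natM k f : (k%:R * f)^`() = k%:R * f^`().
Proof. by rewrite -polyC_natr deriv_mulC. Qed.

Lemma derivn_mulX f k : ('X * f)^`(k.+1) = 'X * f^`(k.+1) + k.+1%:R * f^`(k).
Proof.
elim: k => [|k IH]; first by rewrite !derivn1 derivn0 derivM derivX; ring.
by rewrite derivnS IH derivD derivM derivX -derivnS deriv_natM -derivnS; ring.
Qed.

Lemma dX2 : ('X ^+ 2 - 1 : {poly R})^`() = 2%:R * 'X.
Proof. by rewrite derivB derivXn derivC subr0 -mulr_natl expr1. Qed.

Lemma u_deriv1 p : (u p.+1)^`() = (2 * p.+1)%:R * ('X * u p).
Proof. rewrite /u deriv_exp dX2 /= -mulr_natr natrM; ring. Qed.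

Lemma derivn_natM k f n : (k%:R * f)^`(n) = k%:R * f^`(n).
Proof. by rewrite -polyC_natr !mul_polyC derivnZ. Qed.

Lemma ph_S p n : (n <= p)%N -> ph p.+1 n = 'X * ph p n + (p - n)%:R * ph p n.+1.
Proof.
move=> np; rewrite /ph (subSn np) derivSn u_deriv1.
rewrite derivn_natM [c p]cS.
case E: (p - n)%N => [|j].
  by rewrite !derivn0 -!mul_polyC !polyCM !polyC_natr !natrM; ring.
rewrite derivn_mulX.
have -> : (p - n.+1 = j)%N by lia.
by rewrite -!mul_polyC !polyCM !polyC_natr !natrM; ring.
Qed.

Lemma lincomb (x y a b : {poly R}) : a = b -> x - y = a - b -> x = y.
Proof. by move=> -> /eqP; rewrite subrr subr_eq0 => /eqP. Qed.

Lemma ode0 p : ('X ^+ 2 - 1) * (u p)^`() = (2 * p)%:R * ('X * u p).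
Proof.
case: p => [|p]; first by rewrite /u expr0 derivC muln0 mulr0 mul0r.
rewrite u_deriv1 /u [(_ ^+ 2 - 1) ^+ p.+1]exprS !natrM; ring.
Qed.

Lemma ode p a : ('X ^+ 2 - 1) * (u p)^`(a.+2) + (2 * a.+1)%:R * ('X * (u p)^`(a.+1))
   + (a.+1 * a)%:R * (u p)^`(a)
  = (2 * p)%:R * ('X * (u p)^`(a.+1)) + (2 * p * a.+1)%:R * (u p)^`(a).
Proof.
elim: a => [|a IH].
  have H := congr1 deriv (ode0 p).
  rewrite derivM dX2 deriv_natM derivM derivX in H.
  apply: (lincomb H); rewrite !derivnS !derivn0 !natrM; ring.
have H := congr1 deriv IH.
rewrite !derivD !deriv_natM !derivM dX2 !derivX -!derivnS in H.
apply: (lincomb H); rewrite !natrM -!natr1; ring.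
Qed.


Lemma Int_congr2 A B A' B' : Int A' = Int B' -> A = A' -> B = B' -> Int A = Int B.
Proof. by move=> H -> ->. Qed.

Lemma Int_Xff f : f.[1] = 0 -> f.[-1] = 0 -> Int ('X * f * f^`()) = - Int (f * f) / 2.
Proof.
move=> h1 h2; have := Int_parts f ('X * f).
rewrite derivM derivX !hornerM h1 h2 !mul0r subrr sub0r.
rewrite (_ : f * (1 * f + 'X * f^`()) = f * f + 'X * f * f^`()); last by ring.
rewrite IntD (_ : f^`() * ('X * f) = 'X * f * f^`()); last by ring.
move=> H; lra.
Qed.

Lemma Int_X2 f : f.[1] = 0 -> f.[-1] = 0 ->
  Int (('X ^+ 2 - 1) * f^`()^`() * f) =
  - 2 * Int ('X * f * f^`()) - Int (('X ^+ 2 - 1) * f^`() * f^`()).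
Proof.
move=> h1 h2; have := Int_parts (f^`()) (('X ^+ 2 - 1) * f).
rewrite derivM dX2 !hornerM h1 h2 !mulr0 subrr sub0r.
rewrite (_ : f^`() * (2%:R * 'X * f + ('X ^+ 2 - 1) * f^`()) =
   2%:R * ('X * f * f^`()) + ('X ^+ 2 - 1) * f^`() * f^`()); last by ring.
rewrite IntD IntMn (_ : f^`()^`() * (('X ^+ 2 - 1) * f) = ('X ^+ 2 - 1) * f^`()^`() * f);
  last by ring.
move=> ->; ring.
Qed.

Lemma ode_int p a : (a < p)%N ->
  Int (('X ^+ 2 - 1) * (u p)^`(a.+1) * (u p)^`(a.+1)) =
  (p%:R - a%:R - a.+1%:R * (2 * p%:R - a%:R)) * Int ((u p)^`(a) * (u p)^`(a)).
Proof.
move=> ap; have [h1 h2] := u_vanish ap.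
have E := congr1 (fun q => Int (q * (u p)^`(a))) (ode p a); move: E => /=.

set v := (u p)^`(a).
move=> E.
have E' : Int (('X ^+ 2 - 1) * v^`()^`() * v) + (2 * a.+1)%:R * Int ('X * v * v^`())
   + (a.+1 * a)%:R * Int (v * v) =
   (2 * p)%:R * Int ('X * v * v^`()) + (2 * p * a.+1)%:R * Int (v * v).
  rewrite -!IntMn -!IntD; apply: (Int_congr2 E); ring.
rewrite Int_X2 // Int_Xff // in E'.
have -> : Int (('X ^+ 2 - 1) * v^`() * v^`()) =
  -2 * (- Int (v * v) / 2) - ((2 * p)%:R * (- Int (v * v) / 2) + (2 * p * a.+1)%:R * Int (v * v)
   - (2 * a.+1)%:R * (- Int (v * v) / 2) - (a.+1 * a)%:R * Int (v * v)).
  rewrite -E'; ring.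
by rewrite !natrM -!natr1; field.
Qed.


Definition I p n := Int (ph p n * ph p n).

Lemma I_rec n a :
  I (n + a.+1).+1 n = I (n + a.+1) n - n.+1%:R * (2 * a%:R + 1) * I (n + a.+1) n.+1.
Proof.
set q := (n + a.+1)%N.
have nq : (n < q)%N by rewrite /q; lia.
have [b1 b2] := ph_vanish (p := q) (n := n.+1) ltac:(lia).
have HB := ph_deriv nq.
rewrite /I (ph_S (ltnW nq)) -HB.
have -> : (q - n = a.+1)%N by rewrite /q; lia.
set B := ph q n.+1.
rewrite (_ : ('X * B^`() + a.+1%:R * B) * ('X * B^`() + a.+1%:R * B) =
  ('X ^+ 2 - 1) * B^`() * B^`() + B^`() * B^`() + (2 * a.+1)%:R * ('X * B * B^`())
  + (a.+1 * a.+1)%:R * (B * B)); last by rewrite !natrM; ring.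
rewrite !IntD !IntMn Int_Xff //.
have -> : Int (('X ^+ 2 - 1) * B^`() * B^`()) =
  (n.+1%:R - (a.+1%:R) * (2 * q%:R - a%:R)) * Int (B * B).
  have Ha : (q - n.+1 = a)%N by rewrite /q; lia.
  rewrite /B /ph Ha derivZ -derivnS.
  rewrite (_ : ('X ^+ 2 - 1) * (c q *: (u q)^`(a.+1)) * (c q *: (u q)^`(a.+1)) =
     (c q * c q) *: (('X ^+ 2 - 1) * (u q)^`(a.+1) * (u q)^`(a.+1))); last first.
    by rewrite -!mul_polyC polyCM; ring.
  rewrite (_ : (c q *: (u q)^`(a)) * (c q *: (u q)^`(a)) =
     (c q * c q) *: ((u q)^`(a) * (u q)^`(a))); last first.
    by rewrite -!mul_polyC polyCM; ring.
  rewrite !IntZ ode_int; last by rewrite /q; lia.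
  rewrite /q !natrD -!natr1; ring.
by rewrite /q !natrM !natrD -!natr1; field.
Qed.


Definition Wm k := Int (('X ^+ 2 - 1) ^+ k).

Lemma Wm0 : Wm 0 = 2.
Proof. by rewrite /Wm expr0 -derivX Int_deriv !hornerX opprK. Qed.

Lemma X2_1 : ('X ^+ 2 - 1 : {poly R}).[1] = 0.
Proof. by rewrite hornerD hornerN hornerXn hornerC expr1n subrr. Qed.
Lemma X2_N1 : ('X ^+ 2 - 1 : {poly R}).[-1] = 0.
Proof. by rewrite hornerD hornerN hornerXn hornerC sqrrN expr1n subrr. Qed.

Lemma WmS k : Wm k.+1 = - (2 * k.+1%:R) / (2 * k.+1%:R + 1) * Wm k.
Proof.
have := Int_parts 'X (('X ^+ 2 - 1) ^+ k.+1).
rewrite derivX mul1r deriv_exp dX2 /= !hornerM !horner_exp X2_1 X2_N1 expr0n /= !mulr0 subrr sub0r.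
rewrite (_ : 'X * (2%:R * 'X * ('X ^+ 2 - 1) ^+ k *+ k.+1) =
   (2 * k.+1)%:R * (('X ^+ 2 - 1) ^+ k.+1) + (2 * k.+1)%:R * (('X ^+ 2 - 1) ^+ k));
  last by rewrite [(_ ^+ 2 - 1) ^+ k.+1]exprS -mulr_natr natrM; ring.
rewrite IntD !IntMn -/(Wm k) -/(Wm k.+1) natrM => H.
have h : 2 * k.+1%:R + 1 != 0 :> R.
  by apply: lt0r_neq0; have := ler0n R k.+1; lra.
apply: (mulfI h); rewrite mulrA mulrCA divff // mulr1.
by rewrite mulrDl mul1r {2}H; ring.
Qed.

Lemma I_nn n : I n n = c n ^+ 2 * Wm (2 * n).
Proof.
rewrite /I /ph subnn derivn0 /Wm.
rewrite (_ : c n *: u n * (c n *: u n) = (c n ^+ 2) *: (('X ^+ 2 - 1) ^+ (2 * n))).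
  by rewrite IntZ.
by rewrite /u mul2n -addnn exprD -!mul_polyC polyCM; ring.
Qed.

Lemma I_Sn n : I n.+1 n = c n ^+ 2 * (Wm (2 * n) + Wm (2 * n).+1).
Proof.
rewrite /I ph_S // subnn mul0r addr0.
rewrite /ph subnn derivn0 /Wm.
rewrite (_ : 'X * (c n *: u n) * ('X * (c n *: u n)) =
   (c n ^+ 2) *: (('X ^+ 2 - 1) ^+ (2 * n).+1) + (c n ^+ 2) *: (('X ^+ 2 - 1) ^+ (2 * n))).
  by rewrite IntD !IntZ; ring.
by rewrite /u [(_ ^+ 2 - 1) ^+ (2 * n).+1]exprS mul2n -addnn exprD -!mul_polyC polyCM; ring.
Qed.


Definition P p n : R := \prod_(1 <= k < n.+1)
        ((2 * k%:R - 1) / ((2 * p%:R + 1) ^+ 2 - 4 * k%:R ^+ 2)).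
Definition F p n : R := (2 ^+ n.+1 / (n`!)%:R) * (1 / (2 * p%:R + 1)) * P p n.

Lemma PS p n : P p n.+1 = P p n *
  ((2 * n.+1%:R - 1) / ((2 * p%:R + 1) ^+ 2 - 4 * n.+1%:R ^+ 2)).
Proof. by rewrite /P big_nat_recr. Qed.

Lemma P0 p : P p 0 = 1.
Proof. by rewrite /P big_geq. Qed.

Lemma fact_nz n : (n`!)%:R != 0 :> R.
Proof. by rewrite pnatr_eq0 -lt0n fact_gt0. Qed.

Lemma Rlin (x y a b k : R) : a = b -> x - y = k * (a - b) -> x = y.
Proof. by move=> -> /eqP; rewrite subrr mulr0 subr_eq0 => /eqP. Qed.

Ltac simpnat := repeat (rewrite natrD || rewrite -natr1).
Ltac nzs := rewrite ?andbT; repeat (apply/andP; split); apply: lt0r_neq0.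

Lemma Ptel n b : P (n + b).+1 n * (2 * (n + b)%:R + 1) * (4 * n%:R + 2 * b%:R + 3)
  = P (n + b) n * (2 * b%:R + 1) * (2 * (n + b)%:R + 3).
Proof.
elim: n b => [|n IH] b.
  by rewrite !P0 add0n; ring.
have := IH b.+1.
rewrite !PS addSnnS => H.
have hb := ler0n R b; have hn := ler0n R n.
move: H; set X := P _ n; set Y := P _ n => H.
apply: (Rlin (k := ((2 * n.+1%:R - 1) / ((2 * (n + b.+1).+1%:R + 1) ^+ 2 - 4 * n.+1%:R ^+ 2)) *
     (4 * n.+1%:R + 2 * b%:R + 3) / (4 * n%:R + 2 * b.+1%:R + 3)) H).
simpnat.
by field; nzs; nra.
Qed.


Lemma L1 n b : F (n + b).+1 n * (2 * (n + b)%:R + 2 * n%:R + 3) = (2 * b%:R + 1) * F (n + b) n.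
Proof.
have H := Ptel n b.
have hb := ler0n R b; have hn := ler0n R n.
have hf := fact_nz n.
move: H; rewrite /F; set X := P _ n; set Y := P _ n => H.
apply: (Rlin (k := (2 ^+ n.+1 / (n`!)%:R) / ((2 * (n + b)%:R + 1) * (2 * (n + b)%:R + 3))) H).
simpnat.
by field; rewrite ?hf /=; nzs; nra.
Qed.

Lemma Fstep n b : F (n + b.+1) n.+1 = F (n + b.+1) n * (2 * (2 * n%:R + 1)) /
   (n.+1%:R * ((2 * (n + b.+1)%:R + 1) ^+ 2 - 4 * n.+1%:R ^+ 2)).
Proof.
have hb := ler0n R b; have hn := ler0n R n.
have hf := fact_nz n.
rewrite /F PS factS natrM exprS.
simpnat.
by field; rewrite ?hf /=; nzs; nra.
Qed.

Lemma F1 n a : F (n + a.+1).+1 n = F (n + a.+1) n - n.+1%:R * (2 * a%:R + 1) * F (n + a.+1) n.+1.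
Proof.
have H := L1 n a.+1.
have ha := ler0n R a; have hn := ler0n R n.
rewrite Fstep.
move: H; set X := F _ n; set Y := F _ n => H.
apply: (Rlin (k := 1 / (2 * (n + a.+1)%:R + 2 * n%:R + 3)) H).
simpnat.
by field; nzs; nra.
Qed.

Lemma T0 n : I n n = F n n.
Proof.
elim: n => [|n IH].
  by rewrite I_nn muln0 Wm0 /c /F P0 expr0 fact0 mul1r invr1 expr1n mulr0 add0r divr1 expr1 !mulr1 mul1r.
have hn := ler0n R n.
have H2 : F (n + 0).+1 n * (2 * (n + 0)%:R + 2 * n%:R + 3) = (c n.+1 * (2 * n.+1%:R)) ^+ 2 * Wm (2 * n).
  by rewrite L1 addn0 -cS -I_nn IH; ring.
rewrite I_nn (_ : F n.+1 n.+1 = F (n + 0.+1) n.+1); last by rewrite addn1.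
rewrite Fstep -(addn1 n) addn0 in H2 *.
rewrite (_ : (2 * (n + 1))%N = (2 * n).+1.+1); last by lia.
rewrite !WmS.
rewrite ?addn1 in H2 *.
move: H2; set X := F _ n; set W := Wm _ => H2.
apply: (Rlin (k := 2 * (2 * n%:R + 1) / (n.+1%:R * ((2 * n.+1%:R + 1) ^+ 2 - 4 * n.+1%:R ^+ 2))
   / (2 * n%:R + 2 * n%:R + 3)) (esym H2)).
simpnat.
by field; nzs; nra.
Qed.

Lemma T1 n : I n.+1 n = F n.+1 n.
Proof.
have hn := ler0n R n.
have H := L1 n 0.
rewrite addn0 -T0 I_nn in H.
rewrite I_Sn WmS -(addn1 n).
move: H; rewrite addn1; set X := F _ n; set W := Wm _ => H.
apply: (Rlin (k := - 1 / (2 * n%:R + 2 * n%:R + 3)) H).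
simpnat.
by field; nzs; nra.
Qed.

Lemma Tgen a : forall n, I (n + a) n = F (n + a) n /\ I (n + a.+1) n = F (n + a.+1) n.
Proof.
elim: a => [|a IH] n.
  by rewrite addn0 addn1 T0 T1.
split; first by case: (IH n).
rewrite addnS I_rec F1; case: (IH n) => _ ->.
by rewrite -addSnnS; case: (IH n.+1) => -> _.
Qed.

End Alg.

Theorem lemma4 (R : realType) (n p : nat) (hpn : (n <= p)%N) :
  \int[@lebesgue_measure R]_(x in `[-1, 1]) (@psi R p n x ^+ 2)
  = (2 ^+ n.+1 / (n`!)%:R) * (1 / (2 * p%:R + 1))
    * \prod_(1 <= k < n.+1)
        ((2 * k%:R - 1) / ((2 * p%:R + 1) ^+ 2 - 4 * k%:R ^+ 2)).
Proof.
transitivity (\int[@lebesgue_measure R]_(x in `[-1, 1]) ((@Q R p n) * (@Q R p n)).[x])%R.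
  apply: eq_Rintegral => x; rewrite inE /= in_itv /= => /andP[h _].
  by rewrite psiQ // hornerM expr2.
rewrite Int_Rint Q_ph // -/(@I R p n).
have := (@Tgen R (p - n) n).1; rewrite subnKC // => ->.
Qed.
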